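(* Let $\alpha(\ell)$ be the first-order formula in the language of rings $$\alpha(\ell):\ \ \neg\,\mathrm{C}(\ell)\ \wedge\ \forall f\,\exists q\,\big(\mathrm{C}(f-q\ell)\big),$$ where $\mathrm{C}(t)$ abbreviates the formula ''$t=0\ \vee\ \exists u\,(tu=1)$''. Then for every field $R$, the formula $\alpha$ defines in the ring $R[x]$ ($x$ a single indeterminate) exactly the set $L$ of polynomials of degree $1$. Moreover, for every field $R$ and every $\ell\in L\subseteq R[x]$ we have $\operatorname{POW}(\ell)=\operatorname{LPOW}(\ell)$. In particular, since $\operatorname{LPOW}(\ell)$ is defined by a fixed formula with parameter $\ell$, the sets $\operatorname{POW}(\ell)$, $\ell\in L$, are uniformly definable with parameter $\ell$ across all univariate polynomial rings over fields (of any characteristic).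
   Context: All rings are commutative and unital; $S^{*}$ denotes the units of $S$. For $\ell\in S$: $\operatorname{POW}(\ell)=\{\ell^n:n\ge1\}$; $\operatorname{LPOW}(\ell)$ is the set of $f\in S$ such that $\ell\mid f$, $(\ell-1)\mid(f-1)$, and every divisor of $f$ is a unit or a multiple of $\ell$. For a field $R$ and indeterminate $x$, $L\subseteq R[x]$ denotes the set of polynomials of degree exactly $1$. A family of sets is uniformly definable over a class of rings if a single first-order formula of the language of rings defines the corresponding set in every ring of the class. *)

(* Defs.v *)
From HB Require Import structures.
From mathcomp Require Import all_boot all_order all_algebra.
Set Implicit Arguments. Unset Strict Implicit. Unset Printing Implicit Defensive.
Import GRing.Theory.
Local Open Scope ring_scope.

Definition rdvd (S : comNzRingType) (a b : S) : Prop := exists c : S, b = a * c.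

Definition Cform (S : comNzRingType) (t : S) : Prop := t = 0 \/ exists u : S, t * u = 1.

Definition alpha (S : comNzRingType) (l : S) : Prop :=
  ~ Cform l /\ forall f : S, exists q : S, Cform (f - q * l).

Definition POW (S : comNzRingType) (l f : S) : Prop :=
  exists n : nat, (1 <= n)%N /\ f = l ^+ n.

Definition LPOW (S : comNzRingType) (l f : S) : Prop :=
  [/\ rdvd l f, rdvd (l - 1) (f - 1) &
      forall d : S, rdvd d f -> (exists u : S, d * u = 1) \/ rdvd l d].

(* Main.v *)
Require Import Defs.
From HB Require Import structures.
From mathcomp Require Import all_boot all_order all_algebra.
From mathcomp Require Import zify ring.
Import GRing.Theory.
Local Open Scope ring_scope.

Section H.
Variable R : fieldType.
Implicit Types p q l f d : {poly R}.

Lemma rdvdP (a b : {poly R}) : rdvd a b <-> a %| b.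
Proof.
split.
  by case=> c ->; rewrite mulrC dvdp_mull // dvdpp.
by case/dvdpP=> c ->; exists c; rewrite mulrC.
Qed.

Lemma unitP p : (exists u, p * u = 1) <-> size p = 1%N.
Proof.
split.
  case=> u pu.
  have p0 : p != 0 by apply/eqP=> p0; move: pu; rewrite p0 mul0r => /eqP; rewrite eq_sym oner_eq0.
  have u0 : u != 0 by apply/eqP=> u0; move: pu; rewrite u0 mulr0 => /eqP; rewrite eq_sym oner_eq0.
  have := size_mul p0 u0; rewrite pu size_poly1.
  move: p0 u0; rewrite -!size_poly_gt0 => a b h.
  have h2 : ((size p + size u).-1 = 1)%N by rewrite -h.
  lia.
move/eqP/size_poly1P=> [c c0 ->]; exists (c^-1)%:P.
by rewrite -polyCM mulfV.
Qed.

Lemma size_lsub1 l : size l = 2%N -> size (l - 1) = 2%N.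
Proof. by move=> sl; rewrite size_addl sl // size_opp size_poly1. Qed.

Lemma Cform_size (t : {poly R}) : Cform t <-> (size t <= 1)%N.
Proof.
rewrite /Cform unitP; split.
  by case=> [->|->]; rewrite ?size_poly0.
rewrite leq_eqVlt ltnS leqn0 size_poly_eq0; case/orP=> [/eqP|/eqP]; by [right|left].
Qed.

End H.


Section H2.
Variable R : fieldType.

Lemma part1 (l : {poly R}) : alpha l <-> size l = 2%N.
Proof.
split.
  case=> nC hf.
  have sl : (2 <= size l)%N.
    by rewrite ltnNge; apply/negP=> h; apply: nC; apply/Cform_size.
  have [q /Cform_size hq] := hf 'X.
  have [q0|q0] := eqVneq q 0.
    by move: hq; rewrite q0 mul0r subr0 size_polyX.
  have l0 : l != 0 by rewrite -size_poly_gt0; lia.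
  have sq : (0 < size q)%N by rewrite size_poly_gt0.
  have sql := size_mul q0 l0.
  case: (ltnP 2 (size l)) => h3; last lia.
  have sX : size ('X : {poly R}) = 2%N by rewrite size_polyX.
  move: hq; rewrite addrC size_polyDl size_opp sql //; first by move=> H; exfalso; move: sq h3 H; move: (size q) (size l) => a b; lia.
  rewrite sX; move: sq h3; move: (size q) (size l) => a b; lia.
move=> sl; split.
  by move/Cform_size; rewrite sl.
move=> f; exists (f %/ l); apply/Cform_size.
have l0 : l != 0 by rewrite -size_poly_gt0 sl.
have -> : f - f %/ l * l = f %% l by rewrite {1}(divp_eq f l) addrAC subrr add0r.
by have := ltn_modpN0 f l0; rewrite sl.
Qed.

Lemma struct (l : {poly R}) (sl : size l = 2%N) : forall n (f : {poly R}), (size f <= n)%N -> f != 0 ->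
  (forall d, d %| f -> size d = 1%N \/ l %| d) ->
  exists c m, c != 0 /\ f = c%:P * l ^+ m.
Proof.
elim=> [|n IH] f sf f0 hd.
  by exfalso; move: f0; rewrite -size_poly_gt0; lia.
case: (boolP (size f == 1%N)) => [/size_poly1P [c c0 ->]|s1].
  by exists c, 0%N; rewrite expr0 mulr1.
have [] := hd f (dvdpp f); first by move=> e; rewrite e eqxx in s1.
case/dvdpP=> c fe.
have c0 : c != 0 by apply/eqP=> c0; move: f0; rewrite fe c0 mul0r eqxx.
have l0 : l != 0 by apply/eqP=> l0; move: f0; rewrite fe l0 mulr0 eqxx.
have sc : (size c <= n)%N.
  move: sf; rewrite fe size_mul // sl; rewrite -size_poly_gt0 in c0.
  move: c0; move: (size c) => a; lia.
have hc : forall d, d %| c -> size d = 1%N \/ l %| d.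
  by move=> d dc; apply: hd; rewrite fe; apply: dvdp_trans dc (dvdp_mulIl _ _).
have [k [m [k0 ce]]] := IH c sc c0 hc.
by exists k, m.+1; split=> //; rewrite fe ce exprSr mulrA.
Qed.

Lemma part2 (l : {poly R}) : size l = 2%N ->
  forall f : {poly R}, POW l f <-> LPOW l f.
Proof.
move=> sl f.
have l0 : l != 0 by rewrite -size_poly_gt0 sl.
have sl1 := @size_lsub1 R l sl.
split.
  case=> n [n1 ->]; split.
  - apply/rdvdP; rewrite -(subnK n1) exprD expr1 dvdp_mull // dvdpp.
  - by exists (\sum_(i < n) l ^+ i); rewrite subrX1.
  move=> d /rdvdP dd.
  have ln0 : l ^+ n != 0 by rewrite expf_neq0.
  have d0 : d != 0 by apply/eqP=> d0; move: dd; rewrite d0 dvd0p (negbTE ln0).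
  have [cp|ncp] := boolP (coprimep d l).
    left; apply/unitP.
    have cpn := coprimep_expr n cp.
    move: cpn; rewrite coprimep_def => /eqP g1.
    have dg : d %| gcdp d (l ^+ n) by rewrite dvdp_gcd dvdpp dd.
    have g0 : gcdp d (l ^+ n) != 0 by rewrite gcdp_eq0 negb_and d0.
    have := dvdp_leq g0 dg; rewrite g1; rewrite -size_poly_gt0 in d0.
    by move: d0; move: (size d) => a; lia.
  right; apply/rdvdP.
  have g0 : gcdp d l != 0 by rewrite gcdp_eq0 negb_and d0.
  have gl := dvdp_leq l0 (dvdp_gcdr d l).
  move: ncp; rewrite coprimep_def => gn.
  have sg : size (gcdp d l) == size l.
    rewrite sl; rewrite sl in gl; rewrite -size_poly_gt0 in g0; apply/eqP; move/eqP: gn.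
    by move: g0 gl; move: (size (gcdp d l)) => a; lia.
  rewrite (dvdp_size_eqp (dvdp_gcdr d l)) in sg.
  by rewrite -(eqp_dvdl _ sg) dvdp_gcdl.
case=> /rdvdP h1 /rdvdP h2 h3.
have f0 : f != 0.
  apply/eqP=> f0; move: h2; rewrite f0 sub0r => /(dvdp_leq _).
  by rewrite oppr_eq0 oner_eq0 size_opp size_poly1 sl1 => /(_ isT).
have [c [m [c0 fe]]] := @struct l sl (size f) f (leqnn _) f0
  (fun d dd => match h3 d (proj2 (@rdvdP R d f) dd) with
               | or_introl u => or_introl (proj1 (@unitP R d) u)
               | or_intror r => or_intror (proj1 (@rdvdP R l d) r) end).
have e : f - 1 = c%:P * (l ^+ m - 1) + (c - 1)%:P by rewrite fe polyCB mulrBr polyC1; ring.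
have hc : (l - 1) %| (c - 1)%:P.
  rewrite e dvdp_addr // in h2; rewrite subrX1; exact/dvdp_mull/dvdp_mulIl.
have c1 : c = 1.
  apply/eqP; rewrite -subr_eq0; apply/negPn/negP=> cn.
  have cn2 : (c - 1)%:P != 0 by rewrite polyC_eq0.
  by have := dvdp_leq cn2 hc; rewrite sl1 size_polyC cn.
move: fe; rewrite c1 mul1r => fe.
clear e; case: m fe => [|m] fe.
  by move: h1; rewrite fe expr0 dvdp1 sl.
by exists m.+1; split.
Qed.

End H2.

Theorem proposition1p7 :
  (forall (R : fieldType) (l : {poly R}), alpha l <-> size l = 2%N) /\
  (forall (R : fieldType) (l : {poly R}), size l = 2%N ->
     forall f : {poly R}, POW l f <-> LPOW l f).
Proof. split; [exact: part1 | exact: part2]. Qed.
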